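(* Let $(X,\mathcal{M})$ be a measurable space, $\Sigma$ a compact Hausdorff group with Haar probability measure $\mu_\Sigma$ acting measurably on $X$ via $T_\sigma$, and let $\Gamma\subset\mathcal{M}_b(X)$ satisfy $S_\Sigma[\Gamma]\subset\Gamma$. Then for all $P,Q\in\mathcal{P}(X)$ (not necessarily $\Sigma$-invariant), $D_f^{\Gamma^{\mathrm{inv}}_\Sigma}(Q\|P)=D_f^\Gamma(S^\Sigma[Q]\|S^\Sigma[P])$ and $W^{\Gamma^{\mathrm{inv}}_\Sigma}(Q,P)=W^\Gamma(S^\Sigma[Q],S^\Sigma[P])$.
   Context: $S_\Sigma[\gamma](x)=\int_\Sigma\gamma(T_\sigma(x))\mu_\Sigma(d\sigma)$; $S^\Sigma[P]$ is the probability measure with $E_{S^\Sigma[P]}[\gamma]=E_P[S_\Sigma[\gamma]]$ for $\gamma\in\mathcal{M}_b(X)$. $\Gamma^{\mathrm{inv}}_\Sigma=\{\gamma\in\Gamma:\gamma\circ T_\sigma=\gamma\ \forall\sigma\}$. $f:[0,\infty)\to\mathbb{R}$ convex, lower semicontinuous, $f(1)=0$, strictly convex at $1$, with Legendre transform $f^*$; $D_f^\Gamma(Q\|P)=\sup_{\gamma\in\Gamma}\{E_Q[\gamma]-\inf_{\nu\in\mathbb{R}}(\nu+E_P[f^*(\gamma-\nu)])\}$; $W^\Gamma(Q,P)=\sup_{\gamma\in\Gamma}\{E_Q[\gamma]-E_P[\gamma]\}$. *)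

(* Defs.v *)
From HB Require Import structures.
From mathcomp Require Import all_boot all_order all_algebra.
From mathcomp Require Import all_classical all_reals all_analysis.

Set Implicit Arguments.
Unset Strict Implicit.
Unset Printing Implicit Defensive.

Import Order.TTheory GRing.Theory Num.Theory.
Import numFieldNormedType.Exports.

Local Open Scope classical_set_scope.
Local Open Scope ring_scope.

Definition borel_of (G : ptopologicalType) := g_sigma_algebraType (@open G).

Definition compact_hausdorff_group (G : ptopologicalType)
  (mul : G -> G -> G) (inv : G -> G) (one : G) : Prop :=
  (forall a b c, mul a (mul b c) = mul (mul a b) c) /\
  (forall a, mul one a = a /\ mul a one = a) /\
  (forall a, mul (inv a) a = one /\ mul a (inv a) = one) /\
  continuous (fun p : G * G => mul p.1 p.2) /\
  continuous inv /\
  hausdorff_space G /\ compact [set: G].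

(** mu is the Haar probability measure: a Borel probability measure which is
    invariant under left and right translations (for a compact group the Haar
    measure is bi-invariant). *)
Definition haar_probability (R : realType) (G : ptopologicalType)
  (mul : G -> G -> G) (mu : probability (borel_of G) R) : Prop :=
  forall (g : G) (A : set (borel_of G)), measurable A ->
    mu (mul g @` A) = mu A /\ mu ((fun s => mul s g) @` A) = mu A.

Definition measurable_action (G : ptopologicalType) (mul : G -> G -> G)
  (one : G) d (X : measurableType d) (T : G -> X -> X) : Prop :=
  [/\ (forall x, T one x = x),
      (forall s t x, T (mul s t) x = T s (T t x)) &
      measurable_fun setT (fun p : borel_of G * X => T p.1 p.2)].

Definition Mb d (X : measurableType d) (R : realType) : set (X -> R) :=
  [set g : X -> R | measurable_fun setT g /\ exists M : R, forall x, `|g x| <= M].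

Definition Ssym (R : realType) (G : ptopologicalType)
  (mu : probability (borel_of G) R) d (X : measurableType d)
  (T : G -> X -> X) (g : X -> R) : X -> R :=
  fun x => fine (\int[mu]_s (g (T s x))%:E)%E.

Definition Gamma_inv (G : Type) (X : Type) (R : Type) (T : G -> X -> X)
  (Gamma : set (X -> R)) : set (X -> R) :=
  [set g | Gamma g /\ forall s, g \o T s = g].

Definition expect d (X : measurableType d) (R : realType)
  (P : probability X R) (g : X -> R) : \bar R := (\int[P]_x (g x)%:E)%E.

Definition legendre (R : realType) (f : R -> R) (y : R) : \bar R :=
  ereal_sup [set (t * y - f t)%:E | t in [set t : R | 0 <= t]].

(** Assumptions on f : [0,oo) -> R (only its values on [0,oo) matter). *)
Definition convex_nonneg (R : realType) (f : R -> R) : Prop :=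
  forall x y t : R, 0 <= x -> 0 <= y -> 0 <= t -> t <= 1 ->
    f (t * x + (1 - t) * y) <= t * f x + (1 - t) * f y.

Definition lsc_nonneg (R : realType) (f : R -> R) : Prop :=
  forall x : R, 0 <= x -> forall e : R, 0 < e ->
    exists2 del : R, 0 < del &
      forall y : R, 0 <= y -> `|y - x| < del -> f x - e < f y.

Definition strictly_convex_at_1 (R : realType) (f : R -> R) : Prop :=
  forall x y t : R, 0 <= x -> 0 <= y -> 0 < t -> t < 1 -> x != y ->
    t * x + (1 - t) * y = 1 -> f 1 < t * f x + (1 - t) * f y.

Definition Df_Gamma d (X : measurableType d) (R : realType) (f : R -> R)
  (Gamma : set (X -> R)) (Q P : probability X R) : \bar R :=
  ereal_sup [set (expect Q g -
     ereal_inf [set (nu%:E + \int[P]_x legendre f (g x - nu))%E | nu in [set: R]])%E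
   | g in Gamma].

Definition W_Gamma d (X : measurableType d) (R : realType)
  (Gamma : set (X -> R)) (Q P : probability X R) : \bar R :=
  ereal_sup [set (expect Q g - expect P g)%E | g in Gamma].

(* Main.v *)
Require Import Defs.
From HB Require Import structures.
From mathcomp Require Import all_boot all_order all_algebra.
From mathcomp Require Import all_classical all_reals all_analysis.
From mathcomp Require Import measurable_realfun.
From mathcomp Require Import ring lra.
Import Order.TTheory GRing.Theory Num.Theory.
Import numFieldNormedType.Exports.
Local Open Scope classical_set_scope.
Local Open Scope ring_scope.
Section Aux.
Local Open Scope ereal_scope.

Lemma intb (R : realType) d (Y : measurableType d) (m : {finite_measure set Y -> \bar R})
  (h : Y -> R) (M : R) : measurable_fun setT h -> (forall y, `|h y| <= M)%R ->
  m.-integrable setT (EFin \o h).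
Proof.
move=> mh hM; apply: (@le_integrable _ _ _ _ _ _ _ (EFin \o cst M)) => //.
- exact/measurable_EFinP.
- move=> y _ /=; rewrite lee_fin (le_trans (hM y))//.
  exact: ler_norm.
- exact: finite_measure_integrable_cst.
Qed.

Lemma Mb_int (R : realType) d (Y : measurableType d) (m : {finite_measure set Y -> \bar R})
  (h : Y -> R) : Mb h -> (\int[m]_y (h y)%:E) \is a fin_num.
Proof.
move=> [mh [M hM]]. by have := integrable_fin_num measurableT (@intb _ _ _ m _ _ mh hM).
Qed.
End Aux.
Section Leg.
Local Open Scope ereal_scope.
Context (R : realType) (f : R -> R).

Lemma leg_ge y t : (0 <= t)%R -> (t * y - f t)%:E <= legendre f y.
Proof. by move=> t0; apply: ereal_sup_ubound; exists t. Qed.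

Lemma leg_lb y : - (f 0)%:E <= legendre f y.
Proof. have h0 : (0 <= (0:R))%R by []. by have := leg_ge y _ h0; rewrite mul0r sub0r EFinN. Qed.

Lemma leg_nd x y : (x <= y)%R -> legendre f x <= legendre f y.
Proof.
move=> xy; apply: ge_ereal_sup => _ [t t0 <-]; apply: le_trans (leg_ge y t t0).
by rewrite lee_fin lerB// ler_wpM2l.
Qed.

Lemma leg_meas : measurable_fun setT (legendre f).
Proof.
apply: (measurability _ (ErealGenCInfty.measurableE R)) => //.
move=> /= _ [_ [r ->] <-]; apply: measurableI => //.
apply: is_interval_measurable => s t /=.
rewrite !in_itv/= !andbT => fs ft u /andP[su ut].
by rewrite in_itv/= andbT (le_trans fs)// leg_nd.
Qed.
End Leg.
Section Main.
Local Open Scope ereal_scope.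
Context (R : realType) (d : measure_display) (X : measurableType d)
  (G : ptopologicalType) (mul : G -> G -> G) (inv : G -> G) (one : G)
  (mu : probability (borel_of G) R) (T : G -> X -> X).
Hypothesis hgrp : compact_hausdorff_group mul inv one.
Hypothesis hH : haar_probability mul mu.
Hypothesis hact : measurable_action mul one T.
Hypothesis mT : measurable_fun setT (fun p : borel_of G * X => T p.1 p.2).

Let F := (fun p : borel_of G * X => T p.1 p.2).

Lemma mTx x : measurable_fun setT (fun s : borel_of G => T s x).
Proof. exact: (measurable_fun_pair1 x mT). Qed.

Lemma Mb_comp (g : X -> R) x : Mb g -> Mb (fun s : borel_of G => g (T s x)).
Proof.
move=> [mg [M hM]]; split; last by exists M.
exact: measurableT_comp mg (mTx x).
Qed.

Lemma SsymE (g : X -> R) x : Mb g -> (Ssym mu T g x)%:E = \int[mu]_s (g (T s x))%:E.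
Proof.
move=> hg; rewrite /Ssym fineK//.
exact: (@Mb_int _ _ _ mu _ (Mb_comp g x hg)).
Qed.

Lemma Mb_indic (A : set X) : measurable A -> Mb (\1_A : X -> R).
Proof.
move=> mA; split; first exact: measurable_indic.
exists 1%R => x; rewrite indicE; case: (x \in A) => /=; by rewrite ?normr1 ?normr0.
Qed.

Lemma K0 (P SP : probability X R)
  (hSP : forall g : X -> R, Mb g -> expect SP g = expect P (Ssym mu T g))
  (A : set X) : measurable A -> SP A = pushforward (mu \x P) F A.
Proof.
move=> mA.
have mFA : measurable (F @^-1` A) by rewrite -[F @^-1` A]setTI; exact: mT.
rewrite -[A in SP A](setIT A) -integral_indic// -/(expect SP _) hSP; last exact: Mb_indic.
rewrite /pushforward -[X in _ = (mu \x P) X](setIT) -integral_indic//.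
rewrite fubini_tonelli2//; last first.
  exact/measurable_EFinP/measurable_indic.
apply: eq_integral => x _.
rewrite SsymE; last exact: Mb_indic.
rewrite /fubini_G; apply: eq_integral => s _.
by rewrite !indicE.
Qed.

Lemma K1 (P SP : probability X R)
  (hSP : forall g : X -> R, Mb g -> expect SP g = expect P (Ssym mu T g))
  (h : X -> \bar R) : measurable_fun setT h -> (forall x, 0 <= h x) ->
  \int[SP]_x h x = \int[P]_x \int[mu]_s h (T s x).
Proof.
move=> mh h0.
rewrite (eq_measure_integral (pushforward (mu \x P) F)); last first.
  by move=> A mA _; exact: K0.
have h0p : {in setT, forall y, 0 <= h y} by move=> y _; exact: h0.
rewrite ge0_integral_pushforward//.
rewrite preimage_setT fubini_tonelli2//.
- exact: measurableT_comp mh mT.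
- by move=> z; exact: h0.
Qed.

Lemma L2 d' (Y : measurableType d') (m : probability Y R) (h : Y -> \bar R) (c : R) :
  (0 <= c)%R -> measurable_fun setT h -> (forall y, - c%:E <= h y) ->
  \int[m]_y h y = \int[m]_y (h y + c%:E) - c%:E.
Proof.
move=> c0 mh hc.
have hn : forall y, h^\- y <= c%:E.
  by move=> y; rewrite funenegE ge_max lee_fin c0 andbT leeNl.
have hnfin : forall y, h^\- y \is a fin_num.
  move=> y; rewrite fin_numElt (lt_le_trans _ (funeneg_ge0 _ _)) ?ltNyr//=.
  exact: (le_lt_trans (hn y) (ltry _)).
have mhn : measurable_fun setT h^\- by exact: measurable_funeneg.
have mhp : measurable_fun setT h^\+ by exact: measurable_funepos.
have inthn : m.-integrable setT h^\-.
  apply: (@le_integrable _ _ _ _ _ _ _ (EFin \o cst c)) => //.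
  - by move=> y _ /=; rewrite gee0_abs ?funeneg_ge0// ger0_norm.
  - exact: (@finite_measure_integrable_cst _ _ _ m setT c measurableT).
have E : (fun y => h y + c%:E) = (fun y => h^\+ y + (c%:E - h^\- y)).
  apply/funext => y; rewrite [in LHS](funeposneg h).
  by rewrite addeAC addeA.
have p0 : forall y, setT y -> 0 <= h^\+ y by move=> y _; exact: funepos_ge0.
have q0 : forall y, setT y -> 0 <= c%:E - h^\- y.
  by move=> y _; rewrite subre_ge0 ?hn.
have mq : measurable_fun setT (fun y => c%:E - h^\- y).
  exact: emeasurable_funB.
rewrite E ge0_integralD//.
have -> : \int[m]_y (c%:E - h^\- y) = \int[m]_y (cst c%:E \- h^\-) y by [].
rewrite integralB//; last exact: (@finite_measure_integrable_cst _ _ _ m setT c measurableT).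
rewrite integral_cst//.
rewrite [X in c%:E * X]probability_setT mule1.
have bfin : \int[m]_y h^\- y \is a fin_num by exact: integrable_fin_num.
rewrite [LHS]integralE.
by rewrite addeA addeAC addeK.
Qed.
Lemma jensen (f : R -> R) (g : X -> R) (nu c : R) x : Mb g ->
  (forall y, - c%:E <= legendre f y) ->
  legendre f (Ssym mu T g x - nu) + c%:E
    <= \int[mu]_s (legendre f (g (T s x) - nu) + c%:E).
Proof.
move=> hg hc.
have [mG [M hM]] := Mb_comp g x hg.
have Gint : mu.-integrable setT (EFin \o (fun s : borel_of G => g (T s x))).
  exact: (@intb _ _ _ mu _ _ mG hM).
rewrite -leeBrDr//.
apply: ge_ereal_sup => _ [t t0 <-].
pose k := (- (t * nu) - f t + c)%R.
pose a := fun s : borel_of G => (t * g (T s x) + k)%R.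
have ma : measurable_fun setT a.
  apply: measurable_funD => //; exact: measurable_funM.
have inta : mu.-integrable setT (EFin \o a).
  apply: (@intb _ _ _ mu _ (`|t| * M + `|k|)%R ma) => s.
  rewrite /a (le_trans (ler_normD _ _))// lerD2r normrM ler_wpM2l//.
have Ea : \int[mu]_s (a s)%:E = (t * (Ssym mu T g x - nu) - f t + c)%:E.
  have -> : (fun s => (a s)%:E) = (fun s => t%:E * (g (T s x))%:E + (cst k%:E) s).
    by apply/funext => s; rewrite /a EFinD EFinM.
  rewrite integralD//; last 2 first.
  - exact: integrableZl.
  - exact: (@finite_measure_integrable_cst _ _ _ mu setT k measurableT).
  rewrite integralZl// integral_cst//.
  rewrite [X in k%:E * X]probability_setT mule1 -SsymE// -EFinM -EFinD.
  by congr (_%:E); rewrite /k; ring.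
rewrite leeBrDr// -EFinD -Ea.
apply: (@le_trans _ _ (\int[mu]_s ((EFin \o a)^\+ s))).
  apply: le_integral => //; first exact: integrable_funepos.
  by move=> s _; rewrite funeposE le_max lexx.
apply: ge0_le_integral => //.
- by apply: measurable_funepos; exact/measurable_EFinP.
- apply: emeasurable_funD => //; apply: measurableT_comp; first exact: leg_meas.
  by apply: measurable_funB.
- move=> s _; rewrite funeposE ge_max; apply/andP; split.
    rewrite /= /a /k.
    have -> : (t * g (T s x) + (- (t * nu) - f t + c) = (t * (g (T s x) - nu) - f t) + c)%R.
      by ring.
    by rewrite EFinD leeD2r// leg_ge.
  by rewrite -leeBlDr// sub0e; exact: hc.
Qed.
Lemma r_meas t : measurable_fun (setT : set (borel_of G)) (fun s : borel_of G => (mul s t : borel_of G)).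
Proof.
have [_ [_ [_ [hc _]]]] := hgrp.
have rc : continuous (fun s : G => mul s t).
  move=> s; apply: (@continuous2_cvg _ _ _ _ _ _ id (cst t) mul s t) => //.
  - exact: (hc (s, t)).
  - exact: cvg_cst.
apply: (measurability _ (erefl : @measurable _ (borel_of G) = <<s (@open G) >>)) => //.
move=> _ [B oB <-]; apply: sub_sigma_algebra.
by rewrite setTI; move/continuousP : rc; apply.
Qed.



Lemma Ssym_inv (g : X -> R) t : Mb g -> Ssym mu T g \o T t = Ssym mu T g.
Proof.
move=> hg; apply/funext => x /=.
have [_ hmulT _] := hact.
have [hA [h1 [hI _]]] := hgrp.
rewrite /Ssym; congr fine.
have E : (fun s => (g (T s (T t x)))%:E) = (fun s => (g (T s x))%:E) \o (fun s => mul s t).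
  by apply/funext => s /=; rewrite hmulT.
rewrite E.
transitivity (\int[pushforward mu (fun s : borel_of G => (mul s t : borel_of G))]_y (g (T y x))%:E).
  rewrite integral_pushforward//.
  - exact: r_meas.
  - apply/measurable_EFinP; apply: measurableT_comp (measurable_fun_pair1 x mT).
    by have [] := hg.
  - rewrite preimage_setT -E.
    have [mG [M hM]] := Mb_comp g (T t x) hg.
    exact: (@intb _ _ _ mu _ _ mG hM).
apply: eq_measure_integral; first exact: r_meas.
move=> ? A mA _.
change (mu ((fun s : borel_of G => mul s t) @^-1` A) = mu A).
have -> : (fun s => mul s t) @^-1` A = (fun s => mul s (inv t)) @` A.
  apply/seteqP; split => [s /= As|_ [a Aa <-]] /=.
    exists (mul s t) => //; rewrite -hA; have [_ ->] := hI t; by have [_ ->] := h1 s.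
  by rewrite -hA; have [-> _] := hI t; have [_ ->] := h1 a.
by have [_ ->] := hH (inv t) A mA.
Qed.

Lemma Ssym_fix (g : X -> R) : Mb g -> (forall s, g \o T s = g) -> Ssym mu T g = g.
Proof.
move=> hg gi; apply/funext => x; rewrite /Ssym.
have -> : (fun s => (g (T s x))%:E) = cst (g x)%:E.
  by apply/funext => s; rewrite /= -[in RHS](gi s).
by rewrite integral_cst// [X in _ * X]probability_setT mule1.
Qed.

Section Fdiv.
Variable f : R -> R.
Variable c : R.
Hypothesis c0 : (0 <= c)%R.
Hypothesis hc : forall y, - c%:E <= legendre f y.

Lemma mleg (g : X -> R) nu : measurable_fun setT g ->
  measurable_fun setT (fun x => legendre f (g x - nu)).
Proof.
move=> mg; apply: measurableT_comp; first exact: leg_meas.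
exact: measurable_funB.
Qed.

Lemma hcP y : 0 <= legendre f y + c%:E.
Proof. by rewrite -leeBlDr// sub0e; exact: hc. Qed.

Lemma Ppart_inv (P SP : probability X R)
  (hSP : forall g : X -> R, Mb g -> expect SP g = expect P (Ssym mu T g))
  (g : X -> R) nu : Mb g -> (forall s, g \o T s = g) ->
  \int[SP]_x legendre f (g x - nu) = \int[P]_x legendre f (g x - nu).
Proof.
move=> hg gi; have mh := mleg g nu hg.1.
rewrite (@L2 _ _ SP _ _ c0 mh (fun y => hc _)) (@L2 _ _ P _ _ c0 mh (fun y => hc _)); congr (_ - _).
rewrite (K1 _ _ hSP); last 2 first.
- exact: emeasurable_funD.
- by move=> x; exact: hcP.
apply: eq_integral => x _.
have -> : (fun s => legendre f (g (T s x) - nu) + c%:E) = cst (legendre f (g x - nu) + c%:E).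
  by apply/funext => s; rewrite /= -[in RHS](gi s).
by rewrite integral_cst// [X in _ * X]probability_setT mule1.
Qed.

Lemma Ppart_jensen (P SP : probability X R)
  (hSP : forall g : X -> R, Mb g -> expect SP g = expect P (Ssym mu T g))
  (g : X -> R) nu : Mb g -> Mb (Ssym mu T g) ->
  \int[P]_x legendre f (Ssym mu T g x - nu) <= \int[SP]_x legendre f (g x - nu).
Proof.
move=> hg hSg; have mh := mleg g nu hg.1; have mk := mleg (Ssym mu T g) nu hSg.1.
rewrite (@L2 _ _ SP _ _ c0 mh (fun y => hc _)) (@L2 _ _ P _ _ c0 mk (fun y => hc _)); apply: leeD2r.
have mH : measurable_fun setT (fun p : borel_of G * X => legendre f (g (T p.1 p.2) - nu) + c%:E).
  apply: emeasurable_funD => //; exact: measurableT_comp mh mT.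
rewrite (K1 _ _ hSP); last 2 first.
- exact: emeasurable_funD.
- by move=> x; exact: hcP.
apply: ge0_le_integral => //.
- by move=> x _; exact: hcP.
- exact: emeasurable_funD.
- exact: (measurable_fun_fubini_tonelli_G _ mH (fun p => hcP _)).
- by move=> x _; exact: jensen.
Qed.
End Fdiv.
Lemma mainL (f : R -> R) (Gamma : set (X -> R)) :
  Gamma `<=` @Mb _ X R ->
  (forall g, Gamma g -> Gamma (Ssym mu T g)) ->
  forall (Q P SQ SP : probability X R),
    (forall g, @Mb _ X R g -> expect SQ g = expect Q (Ssym mu T g)) ->
    (forall g, @Mb _ X R g -> expect SP g = expect P (Ssym mu T g)) ->
    Df_Gamma f (Gamma_inv T Gamma) Q P = Df_Gamma f Gamma SQ SP /\
    W_Gamma (Gamma_inv T Gamma) Q P = W_Gamma Gamma SQ SP.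
Proof.
move=> GM GS Q P SQ SP hSQ hSP.
pose c := `|f 0|%R.
have c0 : (0 <= c)%R by exact: normr_ge0.
have hc : forall y, - c%:E <= legendre f y.
  move=> y; apply: le_trans (@leg_lb R f y); rewrite leeN2 lee_fin; exact: ler_norm.
have GinvS : forall g, Gamma g -> Gamma_inv T Gamma (Ssym mu T g).
  move=> g Gg; split; first exact: GS.
  by move=> s; exact: Ssym_inv (GM g Gg).
have eQ : forall g, Gamma_inv T Gamma g -> expect SQ g = expect Q g.
  by move=> g [Gg gi]; rewrite hSQ ?Ssym_fix//; exact: GM.
have eP : forall g, Gamma_inv T Gamma g -> expect SP g = expect P g.
  by move=> g [Gg gi]; rewrite hSP ?Ssym_fix//; exact: GM.
split; apply/eqP; rewrite eq_le; apply/andP; split.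
- apply: ge_ereal_sup => _ [g [Gg gi] <-]; apply: ereal_sup_ubound.
  exists g => //; rewrite eQ//; congr (_ - ereal_inf _).
  apply: eq_imagel => nu _; rewrite (@Ppart_inv f c c0 hc _ _ hSP g nu (GM g Gg) gi)//.
- apply: ge_ereal_sup => _ [g Gg <-].
  apply: le_trans (ereal_sup_ubound _); last by exists (Ssym mu T g) => //; exact: GinvS.
  rewrite hSQ; last exact: GM.
  apply: leeB => //.
  apply: le_ereal_inf_tmp => _ [nu _ <-].
  apply: (@le_trans _ _ (nu%:E + \int[P]_x legendre f (Ssym mu T g x - nu))).
    by apply: ereal_inf_lbound; exists nu.
  rewrite leeD2l//; apply: (@Ppart_jensen f c c0 hc _ _ hSP g nu (GM g Gg)).
  exact: GM (GS g Gg).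
- apply: ge_ereal_sup => _ [g Gig <-]; apply: ereal_sup_ubound.
  exists g; first by case: Gig.
  by rewrite eQ// eP.
- apply: ge_ereal_sup => _ [g Gg <-].
  apply: le_trans (ereal_sup_ubound _); last by exists (Ssym mu T g) => //; exact: GinvS.
  by rewrite hSQ ?hSP//; exact: GM.
Qed.
End Main.

Theorem theorem4 (R : realType) (d : measure_display) (X : measurableType d)
  (G : ptopologicalType) (mul : G -> G -> G) (inv : G -> G) (one : G)
  (mu : probability (borel_of G) R) (T : G -> X -> X)
  (f : R -> R) (Gamma : set (X -> R)) :
  compact_hausdorff_group mul inv one ->
  haar_probability mul mu ->
  measurable_action mul one T ->
  convex_nonneg f -> lsc_nonneg f -> f 1 = 0 -> strictly_convex_at_1 f ->
  Gamma `<=` @Mb _ X R ->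
  (forall g, Gamma g -> Gamma (Ssym mu T g)) ->
  forall (Q P SQ SP : probability X R),
    (forall g, @Mb _ X R g -> expect SQ g = expect Q (Ssym mu T g)) ->
    (forall g, @Mb _ X R g -> expect SP g = expect P (Ssym mu T g)) ->
    Df_Gamma f (Gamma_inv T Gamma) Q P = Df_Gamma f Gamma SQ SP /\
    W_Gamma (Gamma_inv T Gamma) Q P = W_Gamma Gamma SQ SP.
Proof.
move=> hgrp hH hact _ _ _ _ GM GS Q P SQ SP hSQ hSP.
have [_ _ mT] := hact.
exact: (@mainL R d X G mul inv one mu T hgrp hH hact mT f Gamma GM GS Q P SQ SP hSQ hSP).
Qed.
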